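(* Let $r\in\mathcal R$ be a proper distance matrix. Then $r$ is universal if and only if for each $n\in\mathbb N$ the orbit of $r$ under the group $S^n_\infty$ is everywhere dense (in the weak topology) in $\mathcal R^n(p_n(r))$. Moreover, $r$ is weakly universal if and only if its orbit under $S_\infty$ is everywhere dense in $\mathcal R$.
   Context: $\mathcal R$ is the set of infinite real matrices $r=\{r_{i,j}\}_{i,j\ge1}$ with $r_{i,i}=0$, $r_{i,j}\ge0$, $r_{i,j}=r_{j,i}$, $r_{i,k}+r_{k,j}\ge r_{i,j}$, with the weak (entrywise) topology; $\mathcal R_n$ is the analogous set of $n\times n$ matrices; $p_n(r)$ is the upper-left $n\times n$ corner; $r$ is proper if $r_{i,j}>0$ for $i\ne j$. For $q\in\mathcal R_n$, $A(q)=\{a\in\mathbb R^n:|a_i-a_j|\le q_{i,j}\le a_i+a_j\ \forall i,j\}$ and $\mathcal R^n(q)=\{r\in\mathcal R: p_n(r)=q\}$. $S_\infty$ is the group of finite permutations $g$ of $\mathbb N$, acting on $\mathcal R$ by $(gr)_{i,j}=r_{g(i),g(j)}$; $S^n_\infty$ is its subgroup of permutations fixing $1,\dots,n$, which maps each $\mathcal R^n(q)$ into itself. A proper $r$ is universal if for every $n$, $a\in A(p_n(r))$, $\epsilon>0$ there is $m$ with $\max_{i\le n}|r_{i,m}-a_i|<\epsilon$; a proper $r$ is weakly universal if for every $n$ the set of submatrices $\{r_{i_k,i_s}\}_{k,s=1}^n$ over all $n$-tuples of indices is dense in $\mathcal R_n$. *)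

(* Defs.v *)
(* Indices are 0-based: entry (i,j) here is
   entry (i+1,j+1) of the paper. An infinite matrix is a function nat -> nat -> R;
   an n x n matrix is a function nat -> nat -> R of which only entries with
   indices < n are relevant. *)
From Stdlib Require Import Reals.
Open Scope R_scope.

Definition mat := nat -> nat -> R.

Definition is_dist (r : mat) : Prop :=
  (forall i, r i i = 0) /\
  (forall i j, 0 <= r i j) /\
  (forall i j, r i j = r j i) /\
  (forall i j k, r i j <= r i k + r k j).

Definition is_dist_n (n : nat) (q : mat) : Prop :=
  (forall i, (i < n)%nat -> q i i = 0) /\
  (forall i j, (i < n)%nat -> (j < n)%nat -> 0 <= q i j) /\
  (forall i j, (i < n)%nat -> (j < n)%nat -> q i j = q j i) /\
  (forall i j k, (i < n)%nat -> (j < n)%nat -> (k < n)%nat ->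
     q i j <= q i k + q k j).

Definition proper (r : mat) : Prop := forall i j, i <> j -> 0 < r i j.

Definition A_set (n : nat) (q : mat) (a : nat -> R) : Prop :=
  forall i j, (i < n)%nat -> (j < n)%nat ->
    Rabs (a i - a j) <= q i j /\ q i j <= a i + a j.

(* \mathcal R^n(q) = { r \in R : p_n(r) = q } *)
Definition R_n_fiber (n : nat) (q : mat) (r : mat) : Prop :=
  is_dist r /\ forall i j, (i < n)%nat -> (j < n)%nat -> r i j = q i j.

Definition finperm (g : nat -> nat) : Prop :=
  (exists h : nat -> nat, (forall i, h (g i) = i) /\ (forall i, g (h i) = i)) /\
  (exists N, forall i, (N <= i)%nat -> g i = i).

Definition act (g : nat -> nat) (r : mat) : mat := fun i j => r (g i) (g j).

Definition orbit_n (n : nat) (r : mat) (r' : mat) : Prop :=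
  exists g, finperm g /\ (forall i, (i < n)%nat -> g i = i) /\ r' = act g r.

Definition orbit (r : mat) (r' : mat) : Prop :=
  exists g, finperm g /\ r' = act g r.

(* D is everywhere dense in X for the weak (entrywise / product) topology on
   infinite matrices: every basic neighbourhood of a point of X (finitely many
   entries, all within the N x N corner, prescribed up to eps) meets D. *)
Definition weakly_dense_in (D X : mat -> Prop) : Prop :=
  forall x, X x -> forall (N : nat) (eps : R), 0 < eps ->
    exists d, D d /\ forall i j, (i < N)%nat -> (j < N)%nat -> Rabs (d i j - x i j) < eps.

Definition universal (r : mat) : Prop :=
  proper r /\
  forall (n : nat) (a : nat -> R), A_set n r a ->
    forall eps, 0 < eps ->
      exists m : nat, forall i, (i < n)%nat -> Rabs (r i m - a i) < eps.

(* weakly universal: for each n the set of n x n submatrices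
   {r_{i_k, i_s}}_{k,s<n} over all n-tuples of indices is dense in R_n
   (R_n carries its Euclidean topology; sup-norm neighbourhoods). *)
Definition weakly_universal (r : mat) : Prop :=
  proper r /\
  forall (n : nat) (q : mat), is_dist_n n q ->
    forall eps, 0 < eps ->
      exists idx : nat -> nat, forall k s, (k < n)%nat -> (s < n)%nat ->
        Rabs (r (idx k) (idx s) - q k s) < eps.

(* Main.v *)
Require Import Defs.
From Stdlib Require Import Reals Lra Lia.
Open Scope R_scope.

Lemma abs_lt y e : Rabs y < e -> -e < y < e.
Proof. unfold Rabs; destruct (Rcase_abs y); lra. Qed.
Lemma abs_le y e : Rabs y <= e -> -e <= y <= e.
Proof. unfold Rabs; destruct (Rcase_abs y); lra. Qed.
Lemma lt_abs y e : -e < y -> y < e -> Rabs y < e.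
Proof. unfold Rabs; destruct (Rcase_abs y); lra. Qed.
Lemma le_abs y e : -e <= y -> y <= e -> Rabs y <= e.
Proof. unfold Rabs; destruct (Rcase_abs y); lra. Qed.

Definition swap (a b i : nat) : nat :=
  if Nat.eqb i a then b else if Nat.eqb i b then a else i.

Lemma swap_inv a b i : swap a b (swap a b i) = i.
Proof.
  unfold swap.
  destruct (Nat.eqb_spec i a); destruct (Nat.eqb_spec i b);
  repeat match goal with |- context[Nat.eqb ?x ?y] => destruct (Nat.eqb_spec x y) end;
  lia.
Qed.

Lemma extend_perm (k : nat) : forall f : nat -> nat,
  (forall i j, (i<k)%nat -> (j<k)%nat -> f i = f j -> i = j) ->
  exists g, finperm g /\ forall i, (i<k)%nat -> g i = f i.
Proof.
  induction k; intros f Hf.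
  - exists (fun i => i). split; [split|].
    + exists (fun i => i); split; auto.
    + exists 0%nat; auto.
    + intros; lia.
  - destruct (IHk f) as [g [[[h [Hhg Hgh]] [N HN]] Hg]].
    { intros; apply Hf; lia. }
    set (u := h (f k)).
    assert (Hu : forall i, (i<k)%nat -> i <> u).
    { intros i Hi E. assert (H : g u = f k) by (unfold u; auto).
      rewrite <- E in H. rewrite Hg in H by auto. apply Hf in H; lia. }
    exists (fun i => g (swap k u i)). split; [split|].
    + exists (fun i => swap k u (h i)). split; intros i.
      * rewrite Hhg. apply swap_inv.
      * rewrite swap_inv; auto.
    + exists (S (Nat.max N (Nat.max k u))). intros i Hi. unfold swap.
      destruct (Nat.eqb_spec i k); [lia|].
      destruct (Nat.eqb_spec i u); [lia|]. apply HN; lia.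
    + intros i Hi. unfold swap. destruct (Nat.eqb_spec i k).
      * subst. unfold u; auto.
      * destruct (Nat.eqb_spec i u).
        -- exfalso; apply (Hu i); lia.
        -- apply Hg; lia.
Qed.

Lemma nbound (k : nat) (f : nat -> nat) : exists M, forall i, (i < k)%nat -> (f i < M)%nat.
Proof.
  induction k.
  - exists 0%nat; intros; lia.
  - destruct IHk as [M HM]. exists (Nat.max M (S (f k))). intros i Hi.
    destruct (Nat.eq_dec i k). subst; lia. specialize (HM i ltac:(lia)); lia.
Qed.

Fixpoint minl (F : nat -> R) (k : nat) : R :=
  match k with O => F O | S k' => Rmin (minl F k') (F k) end.

Lemma minl_le F k j : (j <= k)%nat -> minl F k <= F j.
Proof.
  induction k; intros Hj.
  - assert (j = 0%nat) by lia; subst; simpl; lra.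
  - simpl. destruct (Nat.eq_dec j (S k)).
    + subst. apply Rmin_r.
    + eapply Rle_trans. apply Rmin_l. apply IHk; lia.
Qed.

Lemma minl_att F k : exists j, (j <= k)%nat /\ minl F k = F j.
Proof.
  induction k.
  - exists 0%nat; split; auto.
  - destruct IHk as [j [Hj E]]. simpl. unfold Rmin.
    destruct (Rle_dec (minl F k) (F (S k))).
    + exists j; split; auto.
    + exists (S k); split; auto.
Qed.

Lemma univ_of_dense (r : mat) (hr : is_dist r) :
  (forall n, weakly_dense_in (orbit_n n r) (R_n_fiber n r)) ->
  forall n a, A_set n r a -> forall eps, 0<eps ->
  exists m : nat, forall i, (i < n)%nat -> Rabs (r i m - a i) < eps.
Proof.
  intros H n a Ha eps He.
  destruct hr as [Hr0 [Hrp [Hrs Hrt]]].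
  set (x := fun i j => if Nat.ltb i n then (if Nat.ltb j n then r i j else a i)
                       else (if Nat.ltb j n then a j else 0)).
  assert (Ha1 : forall i j, (i<n)%nat -> (j<n)%nat -> a i - a j <= r i j).
  { intros i j Hi Hj. destruct (Ha i j Hi Hj) as [H1 _]. apply abs_le in H1. lra. }
  assert (Ha2 : forall i j, (i<n)%nat -> (j<n)%nat -> r i j <= a i + a j).
  { intros i j Hi Hj. destruct (Ha i j Hi Hj) as [_ H1]. lra. }
  assert (Ha0 : forall i, (i<n)%nat -> 0 <= a i).
  { intros i Hi. pose proof (Ha2 i i Hi Hi). rewrite Hr0 in H0. lra. }
  assert (Hx : R_n_fiber n r x).
  { split; [split; [|split; [|split]]|].
    - intros i. unfold x. destruct (Nat.ltb_spec i n); auto.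
    - intros i j. unfold x. destruct (Nat.ltb_spec i n); destruct (Nat.ltb_spec j n); auto; lra.
    - intros i j. unfold x. destruct (Nat.ltb_spec i n); destruct (Nat.ltb_spec j n); auto.
    - intros i j k. unfold x.
      destruct (Nat.ltb_spec i n); destruct (Nat.ltb_spec j n); destruct (Nat.ltb_spec k n);
      try (pose proof (Ha0 i ltac:(lia)));
      try (pose proof (Ha0 j ltac:(lia)));
      try (pose proof (Ha0 k ltac:(lia)));
      try (pose proof (Ha1 i k ltac:(lia) ltac:(lia)));
      try (pose proof (Ha1 j k ltac:(lia) ltac:(lia)));
      try (pose proof (Ha2 i j ltac:(lia) ltac:(lia)));
      pose proof (Hrt i j k); pose proof (Hrs i k); pose proof (Hrs j k); lra.
    - intros i j Hi Hj. unfold x.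
      destruct (Nat.ltb_spec i n); destruct (Nat.ltb_spec j n); auto; lia. }
  destruct (H n x Hx (S n) eps He) as [d [[g [Hg [Hfix Hd']]] Hd]].
  subst d.
  exists (g n). intros i Hi. specialize (Hd i n ltac:(lia) ltac:(lia)).
  unfold act, x in Hd. rewrite (Hfix i Hi) in Hd.
  destruct (Nat.ltb_spec i n); [|lia]. destruct (Nat.ltb_spec n n); [lia|]. exact Hd.
Qed.

Section Build.
Variable r : mat.
Hypothesis hr : is_dist r.
Hypothesis HU : forall (n : nat) (a : nat -> R), A_set n r a ->
    forall eps, 0 < eps ->
      exists m : nat, forall i, (i < n)%nat -> Rabs (r i m - a i) < eps.
Variable x : mat.
Hypothesis hx : is_dist x.
Variable n : nat.
Hypothesis Hxr : forall i j, (i<n)%nat -> (j<n)%nat -> x i j = r i j.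

Lemma build : forall m δ, 0 < δ -> exists idx : nat -> nat,
  (forall i, (i<n)%nat -> idx i = i) /\
  (forall i j, (i < n+m)%nat -> (j < n+m)%nat -> idx i = idx j -> i = j) /\
  (forall i j, (i < n+m)%nat -> (j < n+m)%nat -> Rabs (r (idx i) (idx j) - x i j) < δ).
Proof.
  destruct hr as [Hr0 [Hrp [Hrs Hrt]]].
  destruct hx as [Hx0 [Hxp [Hxs Hxt]]].
  induction m; intros δ Hδ.
  - exists (fun i => i). split; [|split]; auto.
    intros i j Hi Hj. rewrite Hxr by lia. apply lt_abs; lra.
  - destruct (Nat.eq_dec (n+m) 0) as [E|E].
    + exists (fun _ => 0%nat). split; [|split].
      * intros; lia.
      * intros; lia.
      * intros i j Hi Hj. assert (i = 0%nat) by lia. assert (j = 0%nat) by lia. subst.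
        rewrite Hr0, Hx0. apply lt_abs; lra.
    + set (k := (n+m)%nat) in *.
      destruct (IHm (δ/8)) as [idx [Hfix [Hinj Herr]]]; [lra|].
      destruct (nbound k idx) as [M HM].
      set (c := δ/2).
      set (a := fun y => minl (fun j => x j k + c + r (idx j) y) (pred k)).
      assert (Hale : forall y j, (j<k)%nat -> a y <= x j k + c + r (idx j) y).
      { intros y j Hj. unfold a. apply (minl_le (fun j => x j k + c + r (idx j) y)). lia. }
      assert (Hatt : forall y, exists j, (j<k)%nat /\ a y = x j k + c + r (idx j) y).
      { intros y. destruct (minl_att (fun j => x j k + c + r (idx j) y) (pred k)) as [j [Hj Ej]].
        exists j. split; [lia|]. exact Ej. }
      assert (HA : A_set M r a).
      { intros y z _ _.
        destruct (Hatt y) as [j1 [Hj1 E1]]; destruct (Hatt z) as [j2 [Hj2 E2]].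
        pose proof (Hale y j2 Hj2). pose proof (Hale z j1 Hj1).
        pose proof (Hrt (idx j2) y z). pose proof (Hrt (idx j1) z y). pose proof (Hrs y z).
        pose proof (Hrt y z (idx j1)). pose proof (Hrt (idx j1) z (idx j2)).
        pose proof (Hrs y (idx j1)).
        pose proof (abs_lt _ _ (Herr j1 j2 ltac:(lia) ltac:(lia))).
        pose proof (Hxt j1 j2 k). pose proof (Hxs k j2).
        split; [apply le_abs|]; unfold c in *; lra. }
      destruct (HU M a HA (δ/8)) as [mm Hmm]; [lra|].
      assert (Hclose : forall i, (i<k)%nat -> δ/4 < r (idx i) mm - x i k < 5*δ/8).
      { intros i Hi. pose proof (abs_lt _ _ (Hmm (idx i) (HM i Hi))).
        pose proof (Hale (idx i) i Hi). rewrite Hr0 in H0.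
        destruct (Hatt (idx i)) as [j [Hj Ej]].
        pose proof (abs_lt _ _ (Herr j i ltac:(lia) ltac:(lia))).
        pose proof (Hxt i k j). pose proof (Hxs i j).
        unfold c in *; lra. }
      exists (fun i => if Nat.eqb i k then mm else idx i).
      replace (n + S m)%nat with (S k) by (unfold k; lia).
      split; [|split].
      * intros i Hi. destruct (Nat.eqb_spec i k); [unfold k in *; lia|]. auto.
      * intros i j Hi Hj.
        destruct (Nat.eqb_spec i k); destruct (Nat.eqb_spec j k); intros Eq.
        -- lia.
        -- exfalso. pose proof (Hclose j ltac:(lia)). rewrite Eq, Hr0 in H.
           pose proof (Hxp j k). lra.
        -- exfalso. pose proof (Hclose i ltac:(lia)). rewrite <- Eq, Hr0 in H.
           pose proof (Hxp i k). lra.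
        -- apply Hinj; lia.
      * intros i j Hi Hj.
        destruct (Nat.eqb_spec i k); destruct (Nat.eqb_spec j k).
        -- subst. rewrite Hr0, Hx0. apply lt_abs; lra.
        -- subst. pose proof (Hclose j ltac:(lia)). rewrite Hrs, Hxs. apply lt_abs; lra.
        -- subst. pose proof (Hclose i ltac:(lia)). apply lt_abs; lra.
        -- pose proof (abs_lt _ _ (Herr i j ltac:(lia) ltac:(lia))). apply lt_abs; lra.
Qed.
End Build.

Lemma dense_of_univ (r : mat) (hr : is_dist r) : universal r ->
  forall n, weakly_dense_in (orbit_n n r) (R_n_fiber n r).
Proof.
  intros [_ HU] n x [hx Hxr] N eps He.
  set (K := Nat.max N n).
  destruct (build r hr HU x hx n Hxr (K - n) eps He) as [idx [Hfix [Hinj Herr]]].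
  replace (n + (K - n))%nat with K in * by (unfold K; lia).
  destruct (extend_perm K idx Hinj) as [g [Hg Hgi]].
  exists (act g r). split.
  - exists g. split; [auto|split; [|reflexivity]].
    intros i Hi. rewrite Hgi by (unfold K; lia). auto.
  - intros i j Hi Hj. unfold act. rewrite !Hgi by (unfold K; lia). apply Herr; unfold K; lia.
Qed.

Lemma dense_of_wu (r : mat) (hr : is_dist r) : weakly_universal r ->
  weakly_dense_in (orbit r) is_dist.
Proof.
  intros [_ HW] x hx N eps He.
  destruct hr as [Hr0 [Hrp [Hrs Hrt]]].
  destruct hx as [Hx0 [Hxp [Hxs Hxt]]].
  set (c := eps/2).
  set (q := fun i j => if Nat.eq_dec i j then 0 else x i j + c).
  assert (Hq : is_dist_n N q).
  { split; [|split; [|split]]; unfold q.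
    - intros i _. destruct (Nat.eq_dec i i); [auto|congruence].
    - intros i j _ _. destruct (Nat.eq_dec i j); [lra|]. pose proof (Hxp i j); unfold c; lra.
    - intros i j _ _. destruct (Nat.eq_dec i j); destruct (Nat.eq_dec j i); try lia; auto. rewrite Hxs; auto.
    - intros i j k _ _ _.
      pose proof (Hxp i j); pose proof (Hxp i k); pose proof (Hxp k j);
      pose proof (Hxt i j k); assert (0 < c) by (unfold c; lra).
      destruct (Nat.eq_dec i j); destruct (Nat.eq_dec i k); destruct (Nat.eq_dec k j);
      subst; try lia; lra. }
  destruct (HW N q Hq (eps/2)) as [idx Hidx]; [lra|].
  assert (Hinj : forall i j, (i<N)%nat -> (j<N)%nat -> idx i = idx j -> i = j).
  { intros i j Hi Hj E. destruct (Nat.eq_dec i j); auto. exfalso.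
    pose proof (abs_lt _ _ (Hidx i j Hi Hj)). unfold q in H.
    destruct (Nat.eq_dec i j); [lia|]. rewrite E, Hr0 in H. pose proof (Hxp i j). unfold c in *; lra. }
  destruct (extend_perm N idx Hinj) as [g [Hg Hgi]].
  exists (act g r). split.
  - exists g; auto.
  - intros i j Hi Hj. unfold act. rewrite !Hgi by auto.
    pose proof (abs_lt _ _ (Hidx i j Hi Hj)). unfold q in H.
    destruct (Nat.eq_dec i j).
    + subst. rewrite Hr0, Hx0. apply lt_abs; lra.
    + apply lt_abs; unfold c in *; lra.
Qed.

Lemma wu_of_dense (r : mat) (hp : proper r) :
  weakly_dense_in (orbit r) is_dist -> weakly_universal r.
Proof.
  intros HD. split; [exact hp|].
  intros n q [Hq0 [Hqp [Hqs Hqt]]] eps He.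
  destruct n as [|n'].
  - exists (fun _ => 0%nat). intros; lia.
  - set (x := fun i j => q (Nat.min i n') (Nat.min j n')).
    assert (Hx : is_dist x).
    { unfold x; split; [|split; [|split]]; intros; apply Hq0 || apply Hqp || apply Hqs || apply Hqt; lia. }
    destruct (HD x Hx (S n') eps He) as [d [[g [Hg ->]] Hd]].
    exists g. intros k s Hk Hs. specialize (Hd k s Hk Hs). unfold act, x in Hd.
    rewrite !Nat.min_l in Hd by lia. exact Hd.
Qed.

Theorem mainTheorem11 (r : mat) (hr : is_dist r) (hp : proper r) :
  (universal r <-> forall n : nat, weakly_dense_in (orbit_n n r) (R_n_fiber n r)) /\
  (weakly_universal r <-> weakly_dense_in (orbit r) is_dist).
Proof.
  split; split.
  - apply dense_of_univ; auto.
  - intros H. split; [exact hp|]. apply univ_of_dense; auto.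
  - apply dense_of_wu; auto.
  - apply wu_of_dense; auto.
Qed.
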